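(* Consider the Gaussian crossed effect model with $K=2$, $L=1$, $I_1=I_2=I$, and the circulant design $n^{(1,2)}_{ij}=1$ if the cyclic distance between $i$ and $j$ modulo $I$ is at most $d/2$ and $n^{(1,2)}_{ij}=0$ otherwise, where $d$ is a positive even integer with $d+1\le I$ (so levels are balanced with $\bar n=d+1$ and $N=I(d+1)$). Using the ordering $(a^{(1)}_1,\dots,a^{(1)}_I,a^{(2)}_1,\dots,a^{(2)}_I,a^{(0)})$, the ratio $n_{\boldsymbol{L}}/n_{\boldsymbol{Q}}$ is bounded by a constant (e.g. $3$) uniformly in $N$ and $d$, and $\mathrm{Cost(SLA)}=\Theta(N\bar n)$ with constants independent of $N$ and $d$.
   Context: Model: $y_j\sim\mathcal{N}(a^{(0)}+a^{(1)}_{i_1[j]}+a^{(2)}_{i_2[j]},\tau^{-1})$, priors $a^{(k)}_i\sim\mathcal{N}(0,\tau_k^{-1})$, $a^{(0)}\sim\mathcal{N}(\mu_{pr},T_{pr}^{-1})$; $n^{(1,2)}_{ij}$ is the number of observations with factor-1 level $i$ and factor-2 level $j$; $\bar n=KN/p$ with $p=I_1+I_2$. The posterior precision $\boldsymbol{Q}$ has entries $\boldsymbol{Q}[a^{(0)},a^{(0)}]=T_{pr}+N\tau$, $\boldsymbol{Q}[a^{(0)},a^{(k)}_i]=n^{(k)}_i\tau$, $\boldsymbol{Q}[a^{(k)}_i,a^{(k)}_i]=\tau_k+n^{(k)}_i\tau$, $\boldsymbol{Q}[a^{(1)}_i,a^{(2)}_j]=n^{(1,2)}_{ij}\tau$,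 zero otherwise. $G_{\boldsymbol{Q}}$: graph with edge iff off-diagonal entry nonzero. For the given ordering $\theta_1,\dots,\theta_M$, $n_{\boldsymbol{L},m}$ counts $j\ge m$ with $j=m$ or a path from $\theta_m$ to $\theta_j$ in $G_{\boldsymbol{Q}}$ with all intermediate vertices among $\theta_1,\dots,\theta_{m-1}$; $n_{\boldsymbol{L}}=\sum_m n_{\boldsymbol{L},m}$; $n_{\boldsymbol{Q}}$ is the number of nonzero entries in the lower-triangular part (including diagonal) of $\boldsymbol{Q}$. $\mathrm{Cost(SLA)}$ is the flop count of the column Cholesky recursion $L_{mm}^2=Q_{mm}-\sum_{\ell<m}L_{m\ell}^2$, $L_{jm}=(Q_{jm}-\sum_{\ell<m}L_{j\ell}L_{m\ell})/L_{mm}$, restricted to the potential nonzero pattern; it satisfies $\mathrm{Cost(SLA)}=\Theta(\sum_m n_{\boldsymbol{L},m}^2)$. $A=\Theta(B)$ means $c_1\le A/B\le c_2$ for constants $c_1,c_2>0$. *)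

(* Defs.v *)
From mathcomp Require Import all_boot all_order all_algebra.
Set Implicit Arguments. Unset Strict Implicit. Unset Printing Implicit Defensive.
Import Order.TTheory GRing.Theory Num.Theory.
Local Open Scope ring_scope.

(* Design: n12 i j = number of observations with factor-1 level i and
   factor-2 level j (i < I1, j < I2). *)
Definition n1 (I2 : nat) (n12 : nat -> nat -> nat) (i : nat) : nat :=
  (\sum_(j < I2) n12 i j)%N.
Definition n2 (I1 : nat) (n12 : nat -> nat -> nat) (j : nat) : nat :=
  (\sum_(i < I1) n12 i j)%N.
Definition Nobs (I1 I2 : nat) (n12 : nat -> nat -> nat) : nat :=
  (\sum_(i < I1) \sum_(j < I2) n12 i j)%N.

Inductive param := A0 | A1 of nat | A2 of nat.

Definition role (I1 I2 : nat) (p : nat) : param :=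
  if (p < I1)%N then A1 p else if (p < I1 + I2)%N then A2 (p - I1) else A0.

Section Prec.
Variable R : realFieldType.
Variables (tau tau1 tau2 Tpr : R) (I1 I2 : nat) (n12 : nat -> nat -> nat).

Definition Qent (x y : param) : R :=
  match x, y with
  | A0, A0 => Tpr + (Nobs I1 I2 n12)%:R * tau
  | A0, A1 i | A1 i, A0 => (n1 I2 n12 i)%:R * tau
  | A0, A2 j | A2 j, A0 => (n2 I1 n12 j)%:R * tau
  | A1 i, A1 i' => if i == i' then tau1 + (n1 I2 n12 i)%:R * tau else 0
  | A2 j, A2 j' => if j == j' then tau2 + (n2 I1 n12 j)%:R * tau else 0
  | A1 i, A2 j | A2 j, A1 i => (n12 i j)%:R * tau
  end.

Definition precQ : 'M[R]_((I1 + I2).+1) :=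
  \matrix_(p, q) Qent (role I1 I2 p) (role I1 I2 q).
End Prec.

Section Sparse.
Variable R : realFieldType.
Variable M : nat.
Variable Q : 'M[R]_M.

Definition edgeQ : rel 'I_M := fun x y => (x != y) && (Q x y != 0).

(* Steps allowed when searching paths from theta_m: every vertex that is the
   source of a step is theta_m itself or an earlier vertex theta_l (l < m);
   hence all intermediate vertices lie among theta_1..theta_(m-1). *)
Definition stepL (m : 'I_M) : rel 'I_M := fun x y => edgeQ x y && (x <= m)%N.

(* Potential nonzero pattern of L: entry (j, m), j >= m. *)
Definition Lpat (j m : 'I_M) : bool :=
  (m <= j)%N && ((j == m) || connect (stepL m) m j).

Definition nLm (m : 'I_M) : nat := #|[set j : 'I_M | Lpat j m]|.
Definition nL : nat := (\sum_(m < M) nLm m)%N.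

Definition nQ : nat :=
  #|[set pq : 'I_M * 'I_M | (pq.2 <= pq.1)%N && (Q pq.1 pq.2 != 0)]|.

(* Flop count of the column Cholesky recursion restricted to the potential
   nonzero pattern:
   L_mm^2 = Q_mm - sum_{l<m} L_ml^2     : 2 flops per pattern term + 1 sqrt,
   L_jm = (Q_jm - sum_{l<m} L_jl L_ml)/L_mm : 2 flops per pattern term + 1 div. *)
Definition costSLA : nat :=
  (\sum_(m < M)
     (1 + 2 * #|[set l : 'I_M | (l < m)%N && Lpat m l]|
      + \sum_(j < M | (m < j)%N && Lpat j m)
          (1 + 2 * #|[set l : 'I_M | [&& (l < m)%N, Lpat j l & Lpat m l]]|)))%N.
End Sparse.

Definition circ_dist (I i j : nat) : nat :=
  let k := ((i + I - j) %% I)%N in minn k (I - k).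

Definition circ_design (I d : nat) (i j : nat) : nat :=
  if (circ_dist I i j <= d./2)%N then 1%N else 0%N.

(* Main.v *)
Require Import Defs.
From mathcomp Require Import all_boot all_order all_algebra zify ring lra.
Import Order.TTheory GRing.Theory Num.Theory.

Lemma card_ub n (A : {pred 'I_n}) (ivs : seq (nat*nat)) :
  (forall x : 'I_n, x \in A -> has (fun iv => (iv.1 <= x) && (x <= iv.2)) ivs) ->
  #|A| <= sumn (map (fun iv => iv.2.+1 - iv.1) ivs).
Proof.
move=> H; rewrite cardE -(size_map val).
have -> : sumn (map (fun iv => iv.2.+1 - iv.1) ivs) =
   size (flatten (map (fun iv => iota iv.1 (iv.2.+1 - iv.1)) ivs)).
  rewrite size_flatten /shape -map_comp; congr sumn; apply eq_map => iv /=.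
  by rewrite size_iota.
apply: uniq_leq_size; first by rewrite map_inj_uniq ?enum_uniq //; exact: val_inj.
move=> y /mapP [x]; rewrite mem_enum => /H /hasP [iv ivin /andP[h1 h2]] ->.
apply/flattenP; exists (iota iv.1 (iv.2.+1 - iv.1)); first by apply/mapP; exists iv.
rewrite mem_iota. move: h1 h2; case: iv ivin => a b _ /= h1 h2. lia.
Qed.

Lemma card_lb n (A : {pred 'I_n}) lo c : lo + c <= n ->
  (forall x : 'I_n, lo <= x < lo + c -> x \in A) -> c <= #|A|.
Proof.
move=> Hn H; rewrite cardE -(size_map val) -(size_iota lo c).
apply: uniq_leq_size; first exact: iota_uniq.
move=> p; rewrite mem_iota => hp.
have hpn : p < n by lia.
apply/mapP; exists (Ordinal hpn) => //; rewrite mem_enum; apply: H => /=; exact hp.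
Qed.

Lemma cardsum (T : finType) (P : pred T) : #|[set x | P x]| = \sum_x (P x : nat).
Proof.
rewrite -sum1_card big_mkcond /=; apply eq_bigr => x _; rewrite inE; by case: (P x).
Qed.

Lemma sum_lb n (P : pred 'I_n) (g : 'I_n -> nat) lo cnt c : lo + cnt <= n ->
  (forall x : 'I_n, lo <= x < lo + cnt -> P x && (c <= g x)) ->
  cnt * c <= \sum_(x < n | P x) g x.
Proof.
move=> Hn H.
apply: (@leq_trans (\sum_(x < n | lo <= x < lo + cnt) c)).
  rewrite sum_nat_const leq_mul2r; apply/orP; right.
  apply: (@card_lb n _ lo cnt Hn) => x hx. exact hx.
rewrite big_mkcond [X in _ <= X]big_mkcond; apply leq_sum => x _.
case: ifP => // hx; have := H x hx => /andP[-> ->]; done.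
Qed.

Lemma up1 n (L : 'I_n -> 'I_n -> bool) :
  \sum_(m < n) #|[set l : 'I_n | (l < m) && L m l]| <= \sum_(l < n) #|[set m : 'I_n | L m l]|.
Proof.
rewrite [X in _ <= X](eq_bigr (fun l => \sum_m (L m l : nat))); last first.
  by move=> l _; rewrite cardsum.
rewrite exchange_big /=; apply leq_sum => m _; rewrite cardsum; apply leq_sum => l _.
by case: (l < m); case: (L m l).
Qed.

Lemma up2 n (L : 'I_n -> 'I_n -> bool) :
  \sum_(m < n) \sum_(j < n | (m < j) && L j m) #|[set l : 'I_n | [&& l < m, L j l & L m l]]|
  <= \sum_(l < n) #|[set m : 'I_n | L m l]| * #|[set m : 'I_n | L m l]|.
Proof.
apply: (@leq_trans (\sum_(m<n) \sum_(j<n) \sum_(l<n) ((L j l : nat) * (L m l : nat)))).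
  apply leq_sum => m _; rewrite big_mkcond; apply leq_sum => j _; case: ifP => // _.
  rewrite cardsum; apply leq_sum => l _.
  by case: (l<m); case: (L j l); case: (L m l).
rewrite (eq_bigr (fun m => \sum_(l<n) \sum_(j<n) ((L j l : nat) * (L m l : nat)))); last first.
  by move=> m _; rewrite exchange_big.
rewrite exchange_big /=; apply leq_sum => l _; rewrite cardsum big_distrl /=.
apply leq_sum => m _; rewrite big_distrr /=; apply leq_sum => j _; by rewrite mulnC.
Qed.

Lemma circ_mod I i j : i < I -> j < I -> (i + I - j) %% I = if j <= i then i - j else i + I - j.
Proof.
move=> hi hj; case: leqP => hji.
  have -> : i + I - j = (i - j) + I by lia.
  rewrite modnDr modn_small //; lia.
rewrite modn_small //; lia.
Qed.

Lemma circ_nz I d i j : i < I -> j < I -> circ_design I d i j != 0 ->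
  (j <= i /\ (i - j <= d./2 \/ I - (i - j) <= d./2)) \/
  (i < j /\ (i + I - j <= d./2 \/ I - (i + I - j) <= d./2)).
Proof.
move=> hi hj; rewrite /circ_design /circ_dist circ_mod //.
case: ifP => // H _; move: H; rewrite geq_min; case: leqP => hji /orP [] ?; lia.
Qed.

Lemma circ_one I d i j : i < I -> j < I -> (j <= i -> i - j <= d./2) ->
  (i < j -> j - i <= d./2) -> circ_design I d i j = 1.
Proof.
move=> hi hj; rewrite /circ_design /circ_dist circ_mod // geq_min.
case: leqP => hji H1 H2; rewrite ifT //; apply/orP; [left; lia | right; lia].
Qed.

Lemma role_A1 I p : p < I -> role I I p = A1 p.
Proof. by rewrite /role => ->. Qed.
Lemma role_A2 I p : I <= p < I + I -> role I I p = A2 (p - I).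
Proof. by rewrite /role => /andP [h1 h2]; rewrite ltnNge h1 /= h2. Qed.
Lemma role_A0 I p : I + I <= p -> role I I p = A0.
Proof. rewrite /role => h; rewrite ifF; last lia; rewrite ifF //; lia. Qed.

Section Edges.
Variables (R : realFieldType) (tau tau1 tau2 Tpr : R) (I : nat) (n12 : nat -> nat -> nat).
Local Notation Q := (precQ tau tau1 tau2 Tpr I I n12).

Lemma edge_cases (u v : 'I_(I+I).+1) : edgeQ Q u v ->
  [/\ (u < I -> v < I -> False), (I <= u < I+I -> I <= v < I+I -> False),
      (u < I -> I <= v < I+I -> n12 u (v - I) != 0) &
      (I <= u < I+I -> v < I -> n12 v (u - I) != 0)].
Proof.
rewrite /edgeQ mxE => /andP [neq nz]; split => h1 h2.
- move: nz; rewrite role_A1 // role_A1 //=.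
  have neq' : (u:nat) != v by exact neq.
  by rewrite (negbTE neq') eqxx.
- move: nz; rewrite role_A2 // role_A2 //=.
  have -> : (u - I == v - I) = false.
    by apply/eqP; move: neq; rewrite -val_eqE /= => /eqP; lia.
  by rewrite eqxx.
- move: nz; rewrite role_A1 // role_A2 //=.
  by apply: contra => /eqP ->; rewrite mul0r.
- move: nz; rewrite role_A2 // role_A1 //=.
  by apply: contra => /eqP ->; rewrite mul0r.
Qed.

Lemma edge_12 (l j : 'I_(I+I).+1) : (0 < tau)%R -> l < I -> I <= j < I+I ->
  n12 l (j - I) = 1 -> edgeQ Q l j && edgeQ Q j l.
Proof.
move=> ht hl hj hn; rewrite /edgeQ !mxE role_A1 // role_A2 //= hn mul1r.
have hne : l != j by rewrite -val_eqE /=; apply/eqP; lia.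
rewrite (lt0r_neq0 ht) !andbT; apply/andP; split => //; by rewrite eq_sym.
Qed.

Lemma diag_nz (u : 'I_(I+I).+1) : (0 < tau)%R -> (0 < tau1)%R -> (0 < tau2)%R -> (0 < Tpr)%R ->
  Q u u != 0%R.
Proof.
move=> ht h1 h2 h0; rewrite mxE; case: (ltnP u I) => hu.
  rewrite role_A1 //= eqxx lt0r_neq0 //; apply: (@lt_le_trans _ _ tau1) => //.
  by rewrite lerDl mulr_ge0 // ltW.
case: (ltnP u (I+I)) => hu2.
  rewrite role_A2 ?hu ?hu2 //= eqxx lt0r_neq0 //; apply: (@lt_le_trans _ _ tau2) => //.
  by rewrite lerDl mulr_ge0 // ltW.
rewrite role_A0 //= lt0r_neq0 //; apply: (@lt_le_trans _ _ Tpr) => //.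
by rewrite lerDl mulr_ge0 // ltW.
Qed.
End Edges.

Lemma Lpat_closed (R : realFieldType) M (Q : 'M[R]_M) (m : 'I_M) (S : pred 'I_M) :
  S m -> (forall u v, edgeQ Q u v -> u <= m -> S u -> S v) ->
  forall j, Lpat Q j m -> (m <= j) && S j.
Proof.
move=> Sm HS j /andP [hmj H]; rewrite hmj /=.
case/orP: H => [/eqP -> //| /connectP [p pth ->]].
have key : forall x q, S x -> path (stepL Q m) x q -> S (last x q).
  move=> x q; elim: q x => [|y q IH] x //= xS /andP [/andP [e hx] pq].
  exact: IH (HS _ _ e hx xS) pq.
exact: key.
Qed.

Lemma circ_nz' I d i j : circ_design I d i j != 0 -> i < I -> j < I ->
  (j <= i /\ (i - j <= d./2 \/ I - (i - j) <= d./2)) \/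
  (i < j /\ (i + I - j <= d./2 \/ I - (i + I - j) <= d./2)).
Proof. by move=> H hi hj; apply: circ_nz. Qed.

Section Col.
Variables (R : realFieldType) (tau tau1 tau2 Tpr : R) (I d h : nat).
Hypotheses (hh : d./2 = h) (hd : d = 2 * h) (h1 : 1 <= h) (hdI : d.+1 <= I).
Local Notation n12 := (circ_design I d).
Local Notation Q := (precQ tau tau1 tau2 Tpr I I n12).
Local Notation M := (I+I).+1.

Lemma col_bound (m : 'I_M) : nLm Q m <= 4 * (h+1).
Proof.
rewrite /nLm; have hmM := ltn_ord m.
case: (ltnP m I) => hm.
  pose S := fun p : 'I_M => (p == m :> nat) || ((I <= p < I+I) &&
     (((m <= p - I + h) && (p - I <= m + h)) || (I - h <= p - I) || (p - I <= h)))
     || (I+I <= p).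
  have HS : forall j, Lpat Q j m -> (m <= j) && S j.
    apply: Lpat_closed; first by rewrite /S eqxx.
    move=> u v e hu Su; have [c1 c2 c3 c4] := @edge_cases R tau tau1 tau2 Tpr I _ u v e.
    have hu' : (u:nat) = m by move: Su; rewrite /S; lia.
    have hvM := ltn_ord v.
    rewrite /S; case: (ltnP v I) => hv; first by exfalso; apply: c1; lia.
    case: (ltnP v (I+I)) => hv2; last lia.
    have hc : circ_design I d u (v - I) != 0 by apply: c3; lia.
    have := @circ_nz' _ _ _ _ hc.
    have hx1 : (u:nat) < I by lia. have hx2 : v - I < I by lia. rewrite hh; move=> /(_ hx1 hx2); lia.
  apply: (leq_trans (@card_ub _ [set j | Lpat Q j m] ([:: (m:nat,m:nat); (I+m-h, I+m+h); (I+I-h, I+I-1);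
     (I, I+h); (I+I, I+I)]) _)); last by rewrite /=; lia.
  move=> x; rewrite inE => /HS; have := ltn_ord x; rewrite /S /=; lia.
case: (ltnP m (I+I)) => hm2.
  pose S := fun p : 'I_M => ((p < I) && ((p <= m - I + h) || (I - h <= p))) ||
     ((I <= p < I+I) && ((p - I <= m - I + d) || (I - d <= p - I))) || (I + I <= p).
  have HS : forall j, Lpat Q j m -> (m <= j) && S j.
    apply: Lpat_closed; first by rewrite /S; lia.
    move=> u v e hu Su; have [c1 c2 c3 c4] := @edge_cases R tau tau1 tau2 Tpr I _ u v e.
    have hvM := ltn_ord v; have huM := ltn_ord u.
    rewrite /S; case: (ltnP u I) => hu1.
      case: (ltnP v I) => hv; first by exfalso; apply: c1; lia.
      case: (ltnP v (I+I)) => hv2; last lia.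
      have hc : circ_design I d u (v - I) != 0 by apply: c3; lia.
    have := @circ_nz' _ _ _ _ hc.
      have hx1 : (u:nat) < I by lia. have hx2 : v - I < I by lia. rewrite hh; move=> /(_ hx1 hx2); move: Su; rewrite /S; lia.
    case: (ltnP v I) => hv.
      have hc : circ_design I d v (u - I) != 0 by apply: c4; lia.
      have := @circ_nz' _ _ _ _ hc.
      have hx1 : (v:nat) < I by lia. have hx2 : u - I < I by lia. rewrite hh; move=> /(_ hx1 hx2); lia.
    case: (ltnP v (I+I)) => hv2; last lia.
    by exfalso; apply: c2; lia.
  apply: (leq_trans (@card_ub _ [set j | Lpat Q j m] ([:: (m:nat, m + d); (I+I-d, I+I-1); (I+I, I+I)]) _));
    last by rewrite /=; lia.
  move=> x; rewrite inE => /HS; have := ltn_ord x; rewrite /S /=; lia.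
apply: (leq_trans (@card_ub _ [set j | Lpat Q j m] ([:: (I+I, I+I)]) _)); last by rewrite /=; lia.
move=> x; rewrite inE => /andP [hx _]; have := ltn_ord x; rewrite /=; lia.
Qed.
End Col.

Section Bounds.
Variables (R : realFieldType) (tau tau1 tau2 Tpr : R) (I d h : nat).
Hypotheses (hh : d./2 = h) (hd : d = 2 * h) (h1 : 1 <= h) (hdI : d.+1 <= I).
Hypotheses (ht : (0 < tau)%R) (ht1 : (0 < tau1)%R) (ht2 : (0 < tau2)%R) (ht0 : (0 < Tpr)%R).
Local Notation n12 := (circ_design I d).
Local Notation Q := (precQ tau tau1 tau2 Tpr I I n12).
Local Notation M := (I+I).+1.

Lemma N_row (i : nat) : i < I -> h+1 <= \sum_(j < I) circ_design I d i j <= 4*h+2.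
Proof.
move=> hi.
have -> : \sum_(j<I) circ_design I d i j = #|[set j : 'I_I | circ_design I d i j != 0]|.
  rewrite (@cardsum _ (fun j : 'I_I => circ_design I d i j != 0)); apply eq_bigr => j _; rewrite /circ_design; by case: ifP.
apply/andP; split.
  case: (leqP h i) => hhi.
    apply: (@card_lb I _ (i - h) (h+1)); first lia.
    move=> x hx; rewrite inE (@circ_one I d i x) //; rewrite ?hh; lia.
  apply: (@card_lb I _ i (h+1)); first lia.
  move=> x hx; rewrite inE (@circ_one I d i x) //; rewrite ?hh; lia.
apply: (leq_trans (@card_ub _ [set j : 'I_I | circ_design I d i j != 0]
   [:: (i-h, i+h); (I-h, I-1); (0,h)] _)); last by rewrite /=; lia.
move=> x; rewrite inE => /circ_nz'; rewrite hh => /(_ hi (ltn_ord x)).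
have := ltn_ord x; rewrite /=; lia.
Qed.

Lemma N_bounds : I*(h+1) <= Nobs I I n12 <= I*(4*h+2).
Proof.
rewrite /Nobs; apply/andP; split.
  apply: (@leq_trans (\sum_(i<I) (h+1))); first by rewrite sum_nat_const card_ord.
  by apply: leq_sum => i _; case/andP: (N_row _ (ltn_ord i)).
apply: (@leq_trans (\sum_(i<I) (4*h+2))); last by rewrite sum_nat_const card_ord.
by apply: leq_sum => i _; case/andP: (N_row _ (ltn_ord i)).
Qed.

Lemma edge_A12 (l j : 'I_M) : l < I -> I <= j < I+I -> (j - I <= l -> l - (j - I) <= h) ->
  (l < j - I -> (j - I) - l <= h) -> edgeQ Q l j && edgeQ Q j l.
Proof.
move=> hl hj H1 H2; apply: edge_12 => //.
apply: circ_one; rewrite ?hh; lia.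
Qed.

Lemma nQ_lb : I*(h+1) <= nQ Q.
Proof.
rewrite /nQ cardsum.
rewrite -(pair_bigA _ (fun p q : 'I_M => ((q <= p) && (Q p q != 0%R) : nat))) /=.
apply: (leq_trans _ (@sum_lb M xpredT _ I I (h+1) _ _)); first by [].
  lia.
move=> p hp /=; rewrite -cardsum.
have hpM := ltn_ord p.
pose lo := if h <= p - I then p - I - h else p - I.
apply: (@card_lb M _ lo (h+1)); first by rewrite /lo; case: ifP; lia.
move=> q hq; rewrite inE.
have hqI : q < I by move: hq; rewrite /lo; case: ifP; lia.
have := @edge_A12 q p hqI ltac:(lia).
move: hq; rewrite /lo; case: ifP => hc hq.
  move=> /(_ ltac:(lia) ltac:(lia)) /andP [_ /andP [_ ->]]; rewrite andbT; lia.
move=> /(_ ltac:(lia) ltac:(lia)) /andP [_ /andP [_ ->]]; rewrite andbT; lia.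
Qed.

End Bounds.

Section Cost.
Variables (R : realFieldType) (tau tau1 tau2 Tpr : R) (I d h : nat).
Hypotheses (hh : d./2 = h) (hd : d = 2 * h) (h1 : 1 <= h) (hdI : d.+1 <= I).
Hypotheses (ht : (0 < tau)%R) (ht1 : (0 < tau1)%R) (ht2 : (0 < tau2)%R) (ht0 : (0 < Tpr)%R).
Local Notation n12 := (circ_design I d).
Local Notation Q := (precQ tau tau1 tau2 Tpr I I n12).
Local Notation M := (I+I).+1.

Lemma cost_ub : costSLA Q <= M * (1 + 3 * (4*(h+1)) + 2 * ((4*(h+1)) * (4*(h+1)))).
Proof.
set B := 4*(h+1).
have Hcol : forall l : 'I_M, #|[set m | Lpat Q m l]| <= B.
  by move=> l; apply: (@col_bound R tau tau1 tau2 Tpr I d h).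
have H1 := up1 _ (Lpat Q). have H2 := up2 _ (Lpat Q).
have HA : \sum_(l < M) #|[set m : 'I_M | Lpat Q m l]| <= M * B.
  apply: (@leq_trans (\sum_(l<M) B)); first by apply: leq_sum => l _.
  by rewrite sum_nat_const card_ord.
have HB : \sum_(l < M) #|[set m : 'I_M | Lpat Q m l]| * #|[set m : 'I_M | Lpat Q m l]| <= M * (B * B).
  apply: (@leq_trans (\sum_(l<M) B * B)); first by apply: leq_sum => l _; apply: leq_mul.
  by rewrite sum_nat_const card_ord.
rewrite /costSLA.
apply: (@leq_trans (\sum_(m<M) (1 + 2 * #|[set l : 'I_M | (l < m) && Lpat Q m l]|
   + (#|[set j : 'I_M | Lpat Q j m]| + 2 * \sum_(j < M | (m < j) && Lpat Q j m)
        #|[set l : 'I_M | [&& l < m, Lpat Q j l & Lpat Q m l]]|)))).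
  apply leq_sum => m _; rewrite leq_add2l big_split /= -big_distrr /= leq_add2r.
  rewrite sum1_card; apply: subset_leq_card; apply/subsetP => j; rewrite !inE.
  by case/andP.
rewrite !big_split /= !big1_eq sum1_card card_ord.
have E : M * (1 + 3 * B + 2 * (B * B)) = M + 3 * (M * B) + 2 * (M * (B * B)).
  by lia.
rewrite E; move: H1 H2 HA HB; move: (M * B) (M * (B * B)) => y z. set s1 := \sum_(l < M) #|[set m | Lpat Q m l]|. set s2 := \sum_(m < M) #|[set l : 'I_M | (l < m) && Lpat Q m l]|. set s3 := \sum_(m < M) \sum_(j < M | (m < j) && Lpat Q j m) #|[set l : 'I_M | [&& l < m, Lpat Q j l & Lpat Q m l]]|. set s4 := \sum_(l < M) #|[set m | Lpat Q m l]| * #|[set m | Lpat Q m l]|. lia.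
Qed.
End Cost.

Section CostLB.
Variables (R : realFieldType) (tau tau1 tau2 Tpr : R) (I d h : nat).
Hypotheses (hh : d./2 = h) (hd : d = 2 * h) (h1 : 1 <= h) (hdI : d.+1 <= I).
Hypotheses (ht : (0 < tau)%R) (ht1 : (0 < tau1)%R) (ht2 : (0 < tau2)%R) (ht0 : (0 < Tpr)%R).
Local Notation n12 := (circ_design I d).
Local Notation Q := (precQ tau tau1 tau2 Tpr I I n12).
Local Notation M := (I+I).+1.

Lemma Lpat_direct (l j : 'I_M) : l <= j -> edgeQ Q l j -> Lpat Q j l.
Proof.
rewrite /Lpat => hl e; rewrite hl /=; apply/orP; right; apply: connect1.
by rewrite /stepL e leqnn.
Qed.

Lemma Lpat_two (m l j : 'I_M) : m <= j -> l <= m -> edgeQ Q m l -> edgeQ Q l j -> Lpat Q j m.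
Proof.
rewrite /Lpat => hmj hlm e1 e2; rewrite hmj /=; apply/orP; right.
apply: (connect_trans (y:=l)); apply: connect1; rewrite /stepL ?e1 ?e2 ?leqnn //.
Qed.

Lemma cost_lb_main : (I - h) * ((h+1)./2 * (2 * (h + 1 - (h+1)./2))) <= costSLA Q.
Proof.
set a := (h+1)./2; set c := h + 1 - a.
have ha := odd_double_half (h+1); rewrite -/a in ha.
have ha1 : 2 * a <= h + 1 by move: ha; case: (odd (h+1)) => /=; lia.
have ha2 : h <= 2 * a by move: ha; case: (odd (h+1)) => /=; lia.
have hcdef : c = h + 1 - a by [].
clear ha; clearbody c a.
rewrite /costSLA.
apply: (@leq_trans (\sum_(m<M) \sum_(j < M | (m < j) && Lpat Q j m)
   (1 + 2 * #|[set l : 'I_M | [&& l < m, Lpat Q j l & Lpat Q m l]]|))); last first.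
  by apply leq_sum => m _; apply leq_addl.
apply: (@sum_lb M xpredT _ I (I - h) (a * (2*c))); first lia.
move=> m hm /=.
have hmM := ltn_ord m.
apply: (@sum_lb M _ _ m.+1 a (2*c)); first lia.
move=> j hj; have hjM := ltn_ord j.
have hl0 : m - I + a < M by lia.
pose l0 : 'I_M := Ordinal hl0.
have hl0v : (l0 : nat) = m - I + a by [].
clearbody l0.
apply/andP; split.
  have hmj : (m < j) by lia.
  rewrite hmj /=.
  have hl0I : (l0:nat) < I by lia.
  have hmA : I <= m < I + I by lia.
  have hjA : I <= j < I + I by lia.
  have f1 : m - I <= l0 -> l0 - (m - I) <= h by lia.
  have f2 : l0 < m - I -> (m - I) - l0 <= h by lia.
  have f3 : j - I <= l0 -> l0 - (j - I) <= h by lia.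
  have f4 : l0 < j - I -> (j - I) - l0 <= h by lia.
  have := @edge_A12 R tau tau1 tau2 Tpr I d h hh hd h1 hdI ht ht1 ht2 ht0 l0 m hl0I hmA f1 f2.
  case/andP => _ e1.
  have := @edge_A12 R tau tau1 tau2 Tpr I d h hh hd h1 hdI ht ht1 ht2 ht0 l0 j hl0I hjA f3 f4.
  case/andP => e2 _.
  have hlm : (l0 : nat) <= m by lia.
  exact: (@Lpat_two m l0 j (ltnW hmj) hlm e1 e2).
apply: (leq_trans _ (leq_addl 1 _)); rewrite leq_mul2l /=.
apply: (@card_lb M _ (m - I + a) c); first lia.
move=> l hl; rewrite inE.
have hlI : l < I by lia.
have hmA : I <= m < I + I by lia.
have hjA : I <= j < I + I by lia.
have f1 : m - I <= l -> l - (m - I) <= h by lia.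
have f2 : l < m - I -> (m - I) - l <= h by lia.
have f3 : j - I <= l -> l - (j - I) <= h by lia.
have f4 : l < j - I -> (j - I) - l <= h by lia.
have := @edge_A12 R tau tau1 tau2 Tpr I d h hh hd h1 hdI ht ht1 ht2 ht0 l m hlI hmA f1 f2.
case/andP => e1 _.
have := @edge_A12 R tau tau1 tau2 Tpr I d h hh hd h1 hdI ht ht1 ht2 ht0 l j hlI hjA f3 f4.
case/andP => e2 _.
have hlm : (l < m) by lia.
have hlj : (l <= j) by lia.
by rewrite hlm (@Lpat_direct l m (ltnW hlm) e1) (@Lpat_direct l j hlj e2).
Qed.
End CostLB.
Local Open Scope ring_scope.

Theorem proposition4 (R : realFieldType) :
  exists C c1 c2 : R, 0 < c1 /\ 0 < c2 /\
  forall (tau tau1 tau2 Tpr : R),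
    0 < tau -> 0 < tau1 -> 0 < tau2 -> 0 < Tpr ->
  forall I d : nat, (0 < d)%N -> ~~ odd d -> (d.+1 <= I)%N ->
    let n12 := circ_design I d in
    let Q := precQ tau tau1 tau2 Tpr I I n12 in
    let N := Nobs I I n12 in
    let nbar : R := (2 * N)%:R / (I + I)%:R in
    (nL Q)%:R / (nQ Q)%:R <= C /\
    c1 <= (costSLA Q)%:R / (N%:R * nbar) <= c2.
Proof.
exists 12%:R, (144%:R)^-1, 135%:R.
split; first by rewrite invr_gt0 ltr0n.
split; first by rewrite ltr0n.
move=> tau tau1 tau2 Tpr ht ht1 ht2 ht0 I d hd0 hev hdI; cbv zeta.
have hdh : (d = 2 * d./2)%N.
  move: (odd_double_half d); rewrite (negbTE hev) add0n -muln2 mulnC => E; by rewrite {1}E.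
pose h := d./2. have hh : d./2 = h by []. clearbody h. rewrite hh in hdh.
have h1 : (1 <= h)%N by lia.
have hI : (0 < I)%N by lia.
have Hcol := @col_bound R tau tau1 tau2 Tpr I d h hh hdh h1 hdI.
have HnL : (nL (precQ tau tau1 tau2 Tpr I I (circ_design I d)) <= (I+I).+1 * (4*(h+1)))%N.
  rewrite /nL; apply: (@leq_trans (\sum_(m < (I+I).+1) (4*(h+1)))).
    by apply: leq_sum => m _; apply: Hcol.
  by rewrite sum_nat_const card_ord.
have HnQ := @nQ_lb R tau tau1 tau2 Tpr I d h hh hdh h1 hdI ht ht1 ht2 ht0.
have /andP [HN1 HN2] := @N_bounds R tau tau1 tau2 Tpr I d h hh hdh h1 hdI ht ht1 ht2 ht0.
have Hub := @cost_ub R tau tau1 tau2 Tpr I d h hh hdh h1 hdI ht ht1 ht2 ht0.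
have Hlb := @cost_lb_main R tau tau1 tau2 Tpr I d h hh hdh h1 hdI ht ht1 ht2 ht0.
move: HnL HnQ HN1 HN2 Hub Hlb.
move: (nL _) (nQ _) (Nobs _ _ _) (costSLA _) => nl nq N X HnL HnQ HN1 HN2 Hub Hlb.
set a := (h+1)./2 in Hlb.
have ha := odd_double_half (h+1); rewrite -/a in ha.
have ha1 : (2 * a <= h + 1)%N by move: ha; case: (odd (h+1)) => /=; lia.
have ha2 : (h <= 2 * a)%N by move: ha; case: (odd (h+1)) => /=; lia.
clear ha; clearbody a.
have n1 : (nl <= 12 * nq)%N.
  apply: (leq_trans HnL); apply: (@leq_trans (12 * (I * (h+1)))); last by rewrite leq_mul2l HnQ orbT.
  clear -hI h1; nia.
have hNpos : (0 < N)%N by clear -HN1 hI h1; nia.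
have n2 : (X * I <= 135 * (N * N))%N.
  have w1 : (1 + 3*(4*(h+1)) + 2*((4*(h+1))*(4*(h+1))) <= 45 * ((h+1)*(h+1)))%N.
    clear -h1; nia.
  have w2 : ((I+I).+1 <= 3 * I)%N by clear -hI; lia.
  have u1 : ((I+I).+1 * (1 + 3 * (4*(h+1)) + 2 * ((4*(h+1)) * (4*(h+1)))) <= 135 * (I * ((h+1)*(h+1))))%N.
    apply: (leq_trans (leq_mul w2 w1)).
    have -> : ((3 * I) * (45 * ((h+1)*(h+1))) = 135 * (I * ((h+1)*(h+1))))%N by ring.
    by [].
  have u2 : (X * I <= 135 * ((I * (h+1)) * (I * (h+1))))%N.
    apply: (@leq_trans (135 * (I * ((h+1)*(h+1))) * I)); first by rewrite leq_mul2r (leq_trans Hub u1) orbT.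
    have -> : (135 * (I * ((h+1)*(h+1))) * I = 135 * ((I * (h+1)) * (I * (h+1))))%N by ring.
    by [].
  apply: (leq_trans u2); rewrite leq_mul2l; apply/orP; right; exact: leq_mul.
have n3 : (N * N <= 144 * (X * I))%N.
  have v1 : (I * h * (h+1) <= (2 * (I - h)) * (2 * a) * (2 * (h + 1 - a)))%N.
    by apply: leq_mul; [apply: leq_mul|]; lia.
  have v2 : ((4*h+2)*(4*h+2) <= 36 * (h * (h+1)))%N by clear -h1; nia.
  have v3 : (I * ((4*h+2)*(4*h+2)) <= 144 * X)%N.
    apply: (@leq_trans (36 * (I * h * (h+1)))).
      have -> : (36 * (I * h * (h+1)) = I * (36 * (h * (h+1))))%N by ring.
      by rewrite leq_mul2l v2 orbT.
    apply: (@leq_trans (36 * ((2 * (I - h)) * (2 * a) * (2 * (h + 1 - a))))).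
      by rewrite leq_mul2l v1 orbT.
    apply: (@leq_trans (144 * ((I - h) * (a * (2 * (h + 1 - a)))))); last by rewrite leq_mul2l Hlb orbT.
    move: (I - h)%N (h + 1 - a)%N => p q.
    have -> : (36 * (2 * p * (2 * a) * (2 * q)) = 144 * (p * (a * (2 * q))))%N by ring.
    by [].
  apply: (@leq_trans ((I * (4*h+2)) * (I * (4*h+2)))); first exact: leq_mul.
  have -> : ((I * (4*h+2)) * (I * (4*h+2)) = I * (I * ((4*h+2)*(4*h+2))))%N by ring.
  have -> : (144 * (X * I) = I * (144 * X))%N by ring.
  by rewrite leq_mul2l v3 orbT.
have hnq : 0 < (nq%:R : R) by rewrite ltr0n; clear -HnQ hI h1; nia.
split.
  by rewrite ler_pdivrMr // -natrM ler_nat.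
have hIR : (I%:R : R) != 0 by rewrite pnatr_eq0 -lt0n.
have E : (N%:R : R) * ((2 * N)%:R / (I + I)%:R) = (N * N)%:R / I%:R.
  rewrite natrM natrD natrM; field; rewrite hIR /=.
  by rewrite -mulr2n mulrn_eq0 /= hIR.
rewrite E invf_div mulrA -natrM.
have hB : 0 < ((N * N)%:R : R) by rewrite ltr0n muln_gt0 hNpos.
apply/andP; split.
  by rewrite ler_pdivlMr // mulrC ler_pdivrMr ?ltr0n // mulrC -natrM ler_nat.
by rewrite ler_pdivrMr // -natrM ler_nat.
Qed.
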